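(* Let $X$ and $Y$ be metric spaces, and suppose that $Y$ is $\mathcal P$-connected and locally $\mathcal P$-contractible for some family $\mathcal P$ of paths. Then every weakly proper local homeomorphism $f:X\to Y$ is a covering projection.
   Context: A family $\mathcal P$ of continuous paths $p:[0,1]\to Y$ in a metric space $Y$ is given. $Y$ is $\mathcal P$-connected if (i) whenever $p\in\mathcal P$, the reverse path $\bar p(t)=p(1-t)$ belongs to $\mathcal P$, and (ii) every two points of $Y$ can be joined by a path in $\mathcal P$. $Y$ is locally $\mathcal P$-contractible if every $y_0\in Y$ has an open neighborhood $U$ with a continuous homotopy $H:U\times[0,1]\to U$ such that $H(y_0,t)=y_0$ for all $t$, $H(y,0)=y_0$ and $H(y,1)=y$ for all $y\in U$, and for every $y\in U$ the path $t\mapsto H(y,t)$ belongs to $\mathcal P$. A continuous map $f:X\to Y$ is weakly proper if for every compact $K\subset Y$, each connected component of $f^{-1}(K)$ is compact in $X$. *)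

(* Defs.v *)
From HB Require Import structures.
From mathcomp Require Import all_boot all_order all_algebra.
From mathcomp Require Import all_classical all_reals all_analysis.
Set Implicit Arguments. Unset Strict Implicit. Unset Printing Implicit Defensive.
Import Order.TTheory GRing.Theory Num.Theory.
Local Open Scope classical_set_scope.
Local Open Scope ring_scope.

(* Paths are represented as functions R -> Y; only their values on [0,1] are
   relevant for continuity, endpoints and reversal. *)
Definition is_path {R : realType} {Y : topologicalType} (p : R -> Y) : Prop :=
  {within `[0, 1], continuous p}.

Definition rev_path {R : realType} {Y : Type} (p : R -> Y) : R -> Y :=
  fun t => p (1 - t).

Definition P_connected {R : realType} {Y : topologicalType}
  (P : set (R -> Y)) : Prop :=
  (forall p, P p -> P (rev_path p)) /\
  (forall a b : Y, exists p, P p /\ p 0 = a /\ p 1 = b).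

Definition locally_P_contractible {R : realType} {Y : topologicalType}
  (P : set (R -> Y)) : Prop :=
  forall y0 : Y, exists U : set Y, open U /\ U y0 /\
    exists H : Y -> R -> Y,
      {within U `*` `[0, 1]%classic, continuous (fun z : Y * R => H z.1 z.2)} /\
      (forall y t, U y -> `[0, 1]%classic t -> U (H y t)) /\
      (forall t, `[0, 1]%classic t -> H y0 t = y0) /\
      (forall y, U y -> H y 0 = y0 /\ H y 1 = y) /\
      (forall y, U y -> P (H y)).

Definition homeo_onto {X Y : topologicalType} (f : X -> Y)
  (A : set X) (B : set Y) : Prop :=
  {within A, continuous f} /\ f @` A = B /\
  (forall a b, A a -> A b -> f a = f b -> a = b) /\
  exists g : Y -> X, (forall a, A a -> g (f a) = a) /\ {within B, continuous g}.

Definition local_homeomorphism {X Y : topologicalType} (f : X -> Y) : Prop :=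
  continuous f /\
  forall x : X, exists U : set X, open U /\ U x /\ open (f @` U) /\
    homeo_onto f U (f @` U).

Definition weakly_proper {X Y : topologicalType} (f : X -> Y) : Prop :=
  continuous f /\
  forall K : set Y, compact K ->
    forall x : X, (f @^-1` K) x -> compact (connected_component (f @^-1` K) x).

Definition covering_projection {X Y : topologicalType} (f : X -> Y) : Prop :=
  continuous f /\
  forall y : Y, exists U : set Y, open U /\ U y /\
    exists (I : Type) (V : I -> set X),
      f @^-1` U = \bigcup_(i in [set: I]) V i /\
      (forall i j, i <> j -> V i `&` V j = set0) /\
      (forall i, open (V i) /\ homeo_onto f (V i) U).

(* Main.v *)
Require Import Defs.
From HB Require Import structures.
From mathcomp Require Import all_boot all_order all_algebra.
From mathcomp Require Import all_classical all_reals all_analysis.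
From mathcomp Require Import lra.
Import Order.TTheory GRing.Theory Num.Theory.
Local Open Scope classical_set_scope.
Local Open Scope ring_scope.
Section Gen.
Context {R : realType}.
Local Notation "[| a , b |]" := (`[a, b]%classic : set R^o).
Lemma inI (a b t : R) : [|a, b|] t = (a <= t <= b).
Proof. by rewrite /= in_itv. Qed.

Lemma cw_near {T : topologicalType} (A : set R^o) (q : R -> T) (t : R) (N : set T) :
  {within A, continuous q} -> A t -> nbhs (q t) N ->
  exists2 d : R, 0 < d & forall s, A s -> `|s - t| < d -> N (q s).
Proof.
move=> /subspace_continuousP /(_ t) qc At Nq.
have := qc At _ Nq; rewrite /= nbhs_simpl /within /=.
move=> /nbhs_ballP [d d0 Hd]; exists d => // s As st.
by apply: (Hd s) => //; rewrite /ball /= distrC.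
Qed.

Lemma conn_itv (a b c : R) (E : R -> Prop) : [|a, b|] c -> E c ->
 (forall t, [|a, b|] t -> E t ->
    exists2 d : R, 0 < d & forall s, [|a, b|] s -> `|s - t| < d -> E s) ->
 (forall t, [|a, b|] t ->
    (forall d : R, 0 < d -> exists2 s, [|a, b|] s & `|s - t| < d /\ E s) -> E t) ->
 forall t, [|a, b|] t -> E t.
Proof.
move=> Ic Ec Hop Hcl.
pose B := [|a, b|] `&` E.
have : B = [|a, b|].
  apply: (@segment_connected R a b).
  - by exists c.
  - exists [set t : R^o | exists2 d : R, 0 < d &
          forall s, `|s - t| < d -> [|a, b|] s -> E s].
      rewrite openE => t [d d0 Hd]; rewrite /interior.
      have d20 : 0 < d / 2 by rewrite divr_gt0.
      apply/nbhs_ballP; exists (d / 2) => //.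
      move=> t' /= tt'; exists (d / 2) => //.
      move=> s st' Is; apply: Hd => //.
      rewrite -(subrK t' s) -addrA (le_lt_trans (ler_normD _ _)) //.
      rewrite (splitr d) ltrD //; by rewrite distrC.
    apply/seteqP; split => t.
      move=> [It Et]; split => //.
      have [d d0 Hd] := Hop t It Et; exists d => // s sd Is; exact: Hd.
    by move=> [It [d d0 Hd]]; split => //; apply: Hd => //; rewrite subrr normr0.
  - exists (closure B); first exact: closed_closure.
    apply/seteqP; split => t.
      by move=> Bt; split; [case: Bt|apply: subset_closure].
    move=> [It ct]; split => //; apply: Hcl => // d d0.
    have [s [[Is Es] bs]] := ct (ball (t : R^o) d) (nbhsx_ballx (t : R^o) d d0); exists s => //; split => //.
    by rewrite distrC.
move=> BE t It; have : B t by rewrite BE.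
by case.
Qed.

End Gen.
Arguments cw_near {R T A q t N}.

Lemma cw_comp {S T U : topologicalType} (A : set S) (B : set T) (p : S -> T) (g : T -> U) :
  {within A, continuous p} -> (forall u, A u -> B (p u)) ->
  {within B, continuous g} -> {within A, continuous (g \o p)}.
Proof.
move=> /subspace_continuousP pc AB /subspace_continuousP gc.
apply/subspace_continuousP => x Ax N /= NN.
have := gc _ (AB _ Ax) _ NN. rewrite /= nbhs_simpl. move=> M.
have := pc _ Ax _ M. rewrite /= nbhs_simpl => HH.
rewrite nbhs_simpl /=.
apply: (@filterS S (nbhs x) _ (fun u => A u -> B (p u) -> N (g (p u)))) HH.
by move=> u Hu Au; exact: (Hu Au (AB _ Au)).
Qed.

Lemma Hnear {R : realType} {Y : topologicalType} (U : set Y) (H : Y -> R -> Y)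
   (y1 : Y) (t : R) (N : set Y) :
  {within U `*` `[0, 1]%classic, continuous (fun z : Y * R => H z.1 z.2)} ->
  U y1 -> `[0, 1]%classic t -> nbhs (H y1 t) N ->
  exists M, nbhs y1 M /\ exists2 d : R, 0 < d & forall y u, U y -> `[0, 1]%classic u ->
     M y -> `|u - t| < d -> N (H y u).
Proof.
move=> /subspace_continuousP /(_ (y1, t)) Hc Uy1 It NN.
have := Hc (conj Uy1 It) _ NN; rewrite /= nbhs_simpl /within /=.
move=> [[P Q]] /= [nP nQ] PQ; exists P; split => //.
move: nQ => /nbhs_ballP [d d0 Hd]; exists d => // y u Uy Iu Py ut.
apply: (PQ (y, u)) => //; split => //=; apply: Hd.
by rewrite /ball /= distrC.
Qed.

Arguments cw_comp {S T U A B p g}.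
Arguments Hnear {R Y U H y1 t N}.
Section Main.
Context {R : realType} {X Y : metricType R} (f : X -> Y).
Hypothesis fc : continuous f.
Hypothesis flh : forall x, exists U, open U /\ U x /\ open (f @` U) /\
    homeo_onto f U (f @` U).
Local Notation "[| a , b |]" := (`[a, b]%classic : set R^o).
Hypothesis fwp : forall K : set Y, compact K -> forall x, (f @^-1` K) x ->
  compact (connected_component (f @^-1` K) x).

Lemma onbhs {T : topologicalType} {W : set T} {z : T} : open W -> W z -> nbhs z W.
Proof. by move=> oW Wz; apply: open_nbhs_nbhs; split. Qed.

Lemma sepX (x1 x2 : X) :
  (forall A B, nbhs x1 A -> nbhs x2 B -> A `&` B !=set0) -> x1 = x2.
Proof. by move=> H; apply: metric_hausdorff => A B; apply: H. Qed.

Lemma chart x : exists W (g : Y -> X), [/\ open W, W x, open (f @` W),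
  (forall a, W a -> g (f a) = a) & {within f @` W, continuous g}].
Proof.
have [W [oW [Wx [ofW [_ [_ [_ [g [gf gc]]]]]]]]] := flh x.
by exists W, g; split.
Qed.

Lemma chart_inv {W : set X} {g : Y -> X} {v : Y} : (forall a, W a -> g (f a) = a) ->
  (f @` W) v -> W (g v) /\ f (g v) = v.
Proof. by move=> gf [a Wa <-]; rewrite gf. Qed.

Lemma uniq_lift (a b c : R) (q1 q2 : R -> X) :
  {within [|a, b|], continuous q1} -> {within [|a, b|], continuous q2} ->
  (forall u, [|a, b|] u -> f (q1 u) = f (q2 u)) ->
  [|a, b|] c -> q1 c = q2 c -> forall t, [|a, b|] t -> q1 t = q2 t.
Proof.
move=> c1 c2 fq Ic qc; apply: (@conn_itv _ a b c (fun t => q1 t = q2 t) Ic qc).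
- move=> t It qt.
  have [W [g [oW Wt _ gf _]]] := chart (q1 t).
  have [d1 d10 H1] := cw_near c1 It (onbhs oW Wt).
  have [d2 d20 H2] := cw_near c2 It (onbhs oW (eq_ind _ W Wt _ qt)).
  exists (Num.min d1 d2); first by rewrite lt_min d10 d20.
  move=> s Is; rewrite lt_min => /andP [s1 s2].
  by rewrite -(gf _ (H1 s Is s1)) -(gf _ (H2 s Is s2)) fq.
- move=> t It Hn; apply: sepX => A B nA nB.
  have [d1 d10 H1] := cw_near c1 It nA.
  have [d2 d20 H2] := cw_near c2 It nB.
  have [s Is [] ] := Hn (Num.min d1 d2) (ltac:(by rewrite lt_min d10 d20)).
  rewrite lt_min => /andP [s1 s2] qs.
  by exists (q1 s); split; [apply: H1|rewrite qs; apply: H2].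
Qed.

Lemma inIP (a b u : R) : [|a, b|] u <-> a <= u /\ u <= b.
Proof. by rewrite inI; split => [/andP|[-> ->]]. Qed.

Lemma closedI (a b : R) : closed [|a, b|].
Proof. exact: (@interval_closed R (BLeft a) (BRight b)). Qed.

Definition Elift (p : R -> Y) (x : X) (t : R) := exists q : R -> X,
  [/\ {within [|0, t|], continuous q}, q 0 = x &
      forall u, [|0, t|] u -> f (q u) = p u].

Lemma glue (p : R -> Y) (x : X) (s t' : R) (q : R -> X) (W : set X) (g : Y -> X) :
  0 <= s -> s <= t' ->
  {within [|0, s|], continuous q} -> q 0 = x ->
  (forall u, [|0, s|] u -> f (q u) = p u) ->
  (forall a, W a -> g (f a) = a) -> {within f @` W, continuous g} ->
  W (q s) -> (forall u, [|s, t'|] u -> (f @` W) (p u)) ->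
  {within [|s, t'|], continuous p} -> Elift p x t'.
Proof.
move=> s0 st qc q0 qp gf gc Wqs pW pc.
pose q' u := if u <= s then q u else g (p u).
exists q'; split.
- have -> : [|0, t'|] = [|0, s|] `|` [|s, t'|].
    apply/seteqP; split => u.
      move=> /inIP [u0 ut]; have [us|us] := lerP u s.
        by left; apply/inIP.
      by right; apply/inIP; split => //; rewrite ltW.
    by case=> /inIP [h1 h2]; apply/inIP; split; lra.
  apply: withinU_continuous; [exact: closedI|exact: closedI|idtac|idtac].
  + apply: (subspace_eq_continuous _ qc) => u /set_mem /inIP [_ us].
    by rewrite /q' /from_subspace us.
  + have gpc := cw_comp pc pW gc.
    apply: (subspace_eq_continuous _ gpc) => u /set_mem /inIP [su _].
    rewrite /q' /from_subspace /=; case: ifP => // us.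
    have -> : u = s by apply/eqP; rewrite eq_le us su.
    by rewrite -qp ?gf //; apply/inIP; split => //; rewrite lexx.
- by rewrite /q' s0.
- move=> u /inIP [u0 ut]; rewrite /q'; case: ifP => us.
    by apply: qp; apply/inIP.
  have : [|s, t'|] u by apply/inIP; split => //; rewrite ltW // ltNge us.
  by move/pW => /(chart_inv gf) [].
Qed.

Lemma subI (a b c d : R) : c <= a -> b <= d -> [|a, b|] `<=` [|c, d|].
Proof. by move=> ca bd u /inIP [h1 h2]; apply/inIP; split; lra. Qed.

Lemma Elift_restr {p x s t} : Elift p x t -> s <= t -> Elift p x s.
Proof.
move=> [q [qc q0 qp]] st; exists q; split => //.
  by apply: continuous_subspaceW qc; apply: subI; rewrite ?lexx.
by move=> u Iu; apply: qp; apply: subI Iu; rewrite ?lexx.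
Qed.

Lemma near_left (t d : R) (P : R -> Prop) : 0 < d ->
  (forall s, t - d < s < t -> P s) -> t^'- P.
Proof.
move=> d0 H; rewrite /at_left /within /=; apply/nbhs_ballP.
exists d => // s /= ts st; apply: H; rewrite st andbT.
move: ts; rewrite /ball /= ltr_norml => /andP [h1 h2]; lra.
Qed.

Lemma exist_lift (p : R -> Y) (x : X) :
  {within [|0, 1|], continuous p} -> f x = p 0 -> Elift p x 1.
Proof.
move=> pc fx.
have I0 : [|0, 1|] 0 by apply/inIP; split; lra.
have I1 : [|0, 1|] 1 by apply/inIP; split; lra.
have base : Elift p x 0.
  exists (fun _ => x); split => //.
    by apply: continuous_subspaceT; exact: cst_continuous.
  by move=> u /inIP [h1 h2]; have -> : u = 0 by lra.
apply: (@conn_itv _ 0 1 0 (Elift p x) I0 base _ _ 1 I1).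
- move=> t It [q [qc q0 qp]].
  have [t0 t1] := (iffLR (inIP _ _ _) It).
  have [W [g [oW Wq ofW gf gc]]] := chart (q t).
  have fWpt : (f @` W) (p t).
    by exists (q t) => //; apply: qp; apply/inIP; split; lra.
  have [d d0 Hd] := cw_near pc It (onbhs ofW fWpt).
  exists d => // s Is sd.
  have [s0 s1] := (iffLR (inIP _ _ _) Is).
  move: sd; rewrite ltr_norml => /andP [sd1 sd2].
  have [st|ts] := lerP s t.
    by apply: (Elift_restr _ st); exists q.
  apply: (@glue p x t s q W g t0 (ltW ts) qc q0 qp gf gc Wq).
    move=> u /inIP [h1 h2]; apply: Hd.
      by apply/inIP; split; lra.
    by rewrite ltr_norml; apply/andP; split; lra.
  by apply: continuous_subspaceW pc; apply: subI; lra.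
- move=> t It Hn.
  have [t0 t1] := (iffLR (inIP _ _ _) It).
  have [tle|tpos] := lerP t 0.
    by have -> : t = 0 by lra.
  have Hlt : forall s, 0 <= s -> s < t -> Elift p x s.
    move=> s s0 st.
    have [s' Is' [s'd Es']] := Hn (t - s) (ltac:(by rewrite subr_gt0)).
    apply: (Elift_restr Es').
    by move: s'd; rewrite ltr_norml => /andP [h1 h2]; lra.
  have [Q HQ] := choice (P := fun s (q : R -> X) => 0 <= s -> s < t ->
     [/\ {within [|0, s|], continuous q}, q 0 = x &
      forall u, [|0, s|] u -> f (q u) = p u]) (fun s =>
     match pselect (0 <= s /\ s < t) with
     | left h => let: ex_intro q hq := Hlt s (proj1 h) (proj2 h) in
                 ex_intro _ q (fun _ _ => hq)
     | right h => ex_intro _ (fun _ => x) (fun a b => False_ind _ (h (conj a b)))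
     end).
  pose K := p @` [|0, 1|].
  have cK : compact K.
    by apply: continuous_compact pc _; exact: segment_compact.
  have Kx : (f @^-1` K) x by exists 0.
  pose C := connected_component (f @^-1` K) x.
  have cC : compact C := fwp _ cK _ Kx.
  have QC : forall s, 0 <= s -> s < t -> C (Q s s).
    move=> s s0 st; have [qc q0 qp] := HQ s s0 st.
    apply: (connected_component_max (B := Q s @` [|0, s|])).
    + by exists 0 => //; apply/inIP; split; lra.
    + move=> z [u Iu <-]; rewrite /preimage /= qp //; exists u => //.
      by apply: subI Iu; lra.
    + by apply: connected_continuous_connected qc; exact: segment_connected.
    + by exists s => //; apply/inIP; split; lra.
  pose F := (fun s => Q s s) @ t^'-.
  have FC : F C.
    apply: (@near_left t t (fun s => C (Q s s)) tpos) => s /andP [h1 h2].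
    apply: QC; lra.
  have [xs [Cxs clxs]] := cC F _ FC.
  have clu : forall d : R, 0 < d -> forall S2, nbhs xs S2 ->
      exists s, [/\ 0 <= s, s < t, t - d < s & S2 (Q s s)].
    move=> d d0 S2 nS2.
    have [e [e0 ed et]] : exists e : R, [/\ 0 < e, e <= d & e <= t].
      by have [dt|dt] := lerP d t; [exists d|exists t]; split => //; lra.
    pose S1 := [set z | exists s, [/\ 0 <= s, s < t, t - d < s & z = Q s s]].
    have FS1 : F S1.
      apply: (@near_left t e (fun s => S1 (Q s s)) e0) => s /andP [h1 h2].
      exists s; split => //; lra.
    have [z [[s [h1 h2 h3 ->]] h4]] := clxs S1 S2 FS1 nS2.
    by exists s.
  have fxs : f xs = p t.
    apply: metric_hausdorff => A B nA nB.
    have nfA : nbhs xs (f @^-1` A) := fc xs A nA.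
    have [d d0 Hd] := cw_near pc It nB.
    have [s [h1 h2 h3 h4]] := clu d d0 _ nfA.
    have [qc q0 qp] := HQ s h1 h2.
    exists (f (Q s s)); split => //.
    rewrite qp; last by apply/inIP; split; lra.
    apply: Hd; first by apply/inIP; split; lra.
    by rewrite ltr_norml; apply/andP; split; lra.
  have [W [g [oW Wxs ofW gf gc]]] := chart xs.
  have fWpt : (f @` W) (p t) by exists xs.
  have [d d0 Hd] := cw_near pc It (onbhs ofW fWpt).
  have [s [h1 h2 h3 h4]] := clu d d0 _ (onbhs oW Wxs).
  have [qc q0 qp] := HQ s h1 h2.
  apply: (@glue p x s t (Q s) W g h1 (ltW h2) qc q0 qp gf gc h4).
    move=> u /inIP [u1 u2]; apply: Hd.
      by apply/inIP; split; lra.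
    by rewrite ltr_norml; apply/andP; split; lra.
  by apply: continuous_subspaceW pc; apply: subI; lra.
Qed.

Lemma small {d1 d2 : R} : 0 < d1 -> 0 < d2 ->
  exists e : R, [/\ 0 < e, e <= d1 & e <= d2].
Proof.
move=> h1 h2; have [dt|dt] := lerP d1 d2; [exists d1|exists d2]; split => //; lra.
Qed.

Lemma param_cont (U : set Y) (H : Y -> R -> Y) (L : Y -> R -> X) (x0 : X) :
  {within U `*` `[0, 1]%classic, continuous (fun z : Y * R => H z.1 z.2)} ->
  (forall y, U y -> {within [|0, 1|], continuous (H y)}) ->
  (forall y, U y -> [/\ {within [|0, 1|], continuous (L y)}, L y 0 = x0 &
      forall u, [|0, 1|] u -> f (L y u) = H y u]) ->
  forall y1, U y1 -> forall t, [|0, 1|] t ->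
  forall N, nbhs (L y1 t) N -> nbhs y1 (fun y => U y -> N (L y t)).
Proof.
move=> Hc Hp Hl y1 Uy1.
pose E t := forall N, nbhs (L y1 t) N -> nbhs y1 (fun y => U y -> N (L y t)).
have I0 : [|0, 1|] 0 by apply/inIP; split; lra.
have E0 : E 0.
  move=> N nN; apply: filterE => y Uy.
  have [_ -> _] := Hl y Uy; have [_ h _] := Hl y1 Uy1.
  by rewrite -h; exact: nbhs_singleton.
have tr : forall t, [|0, 1|] t -> exists2 e : R, 0 < e & forall s t',
    [|0, 1|] s -> [|0, 1|] t' -> `|s - t| < e -> `|t' - t| < e -> E s -> E t'.
  move=> t It.
  have [Lc1 L01 Lp1] := Hl y1 Uy1.
  have [W [g [oW Wz ofW gf gc]]] := chart (L y1 t).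
  have fWH : (f @` W) (H y1 t) by exists (L y1 t) => //; rewrite Lp1.
  have [M [nM [d1 d10 HM]]] := Hnear Hc Uy1 It (onbhs ofW fWH).
  have [d2 d20 HW] := cw_near Lc1 It (onbhs oW Wz).
  have [e [e0 ed1 ed2]] := small d10 d20.
  exists e => // s t' Is It' st t't Es N nN.
  have [s0 s1] := (iffLR (inIP _ _ _) Is).
  have [t'0 t'1] := (iffLR (inIP _ _ _) It').
  move: st t't; rewrite !ltr_norml => /andP [st1 st2] /andP [tt1 tt2].
  have n1 := Es W (onbhs oW (HW s Is (ltac:(rewrite ltr_norml; apply/andP; split; lra)))).
  have My1 : M y1 := nbhs_singleton nM.
  have fWv1 : (f @` W) (H y1 t').
    by apply: HM => //; rewrite ltr_norml; apply/andP; split; lra.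
  have gv1 : g (H y1 t') = L y1 t'.
    rewrite -Lp1 // gf //; apply: HW => //.
    by rewrite ltr_norml; apply/andP; split; lra.
  have /subspace_continuousP gcs := gc.
  have := gcs _ fWv1 N; rewrite /from_subspace gv1 => /(_ nN) N2.
  have N2' : nbhs (H y1 t') (fun v => (f @` W) v -> N (g v)) := N2.
  have [M2 [nM2 [d3 d30 HM2]]] := Hnear Hc Uy1 It' N2'.
  have : nbhs y1 ((fun y => U y -> W (L y s)) `&` M `&` M2).
    by apply: filterI; [apply: filterI|idtac].
  apply: filterS => y [[Ws My] M2y] Uy.
  have [Lc L0 Lp] := Hl y Uy.
  have key : forall a b, [|a, b|] s -> [|a, b|] t' -> 0 <= a -> b <= 1 ->
      t - e < a -> b < t + e -> L y t' = g (H y t').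
    move=> a b Ias Iat a0 b1 ae be.
    have sub01 : [|a, b|] `<=` [|0, 1|] by apply: subI.
    have inW : forall u, [|a, b|] u -> (f @` W) (H y u).
      move=> u /inIP [u1 u2]; apply: HM => //.
        by apply/inIP; split; lra.
      by rewrite ltr_norml; apply/andP; split; lra.
    apply: (@uniq_lift a b s (L y) (g \o H y)) => //.
    - exact: (continuous_subspaceW sub01 Lc).
    - exact: (cw_comp (continuous_subspaceW sub01 (Hp y Uy)) inW gc).
    - move=> u Iu /=; rewrite Lp; last exact: sub01.
      by have [] := chart_inv gf (inW u Iu).
    - by rewrite /= -(Lp s Is) gf //; exact: Ws Uy.
  rewrite (key (Num.min s t') (Num.max s t')).
  - have := HM2 y t' Uy It' M2y; rewrite subrr normr0 => /(_ d30).
    by apply; apply: HM => //; rewrite ltr_norml; apply/andP; split; lra.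
  - by apply/inIP; split; [rewrite ge_min lexx|rewrite le_max lexx].
  - by apply/inIP; split; [rewrite ge_min lexx orbT|rewrite le_max lexx orbT].
  - by rewrite le_min s0 t'0.
  - by rewrite ge_max s1 t'1.
  - by rewrite lt_min; apply/andP; split; lra.
  - by rewrite gt_max; apply/andP; split; lra.
apply: (@conn_itv _ 0 1 0 E I0 E0).
- move=> t It Et; have [e e0 He] := tr t It; exists e => // s Is st.
  by apply: (He t s) => //; rewrite subrr normr0.
- move=> t It Hn; have [e e0 He] := tr t It.
  have [s Is [st Es]] := Hn e e0.
  by apply: (He s t) => //; rewrite subrr normr0.
Qed.

Lemma revI (t : R) : [|0, 1|] t -> [|0, 1|] (1 - t).
Proof. by move=> /inIP [h1 h2]; apply/inIP; split; lra. Qed.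

Lemma rev_cont {T : topologicalType} (r : R -> T) :
  {within [|0, 1|], continuous r} ->
  {within [|0, 1|], continuous (fun t => r (1 - t))}.
Proof.
move=> rc.
have c1 : {within [|0, 1|], continuous (fun t : R^o => 1 - t)}.
  apply: continuous_subspaceT => t.
  by apply: cvgB; [exact: cvg_cst|exact: cvg_id].
exact: (cw_comp c1 revI rc).
Qed.

Lemma cover (P : set (R -> Y)) : (forall p, P p -> is_path p) -> P_connected P ->
  locally_P_contractible P -> covering_projection f.
Proof.
move=> hP [Prev _] lc; split => // y0.
have [U [oU [Uy0 [H [Hc [HU [Hy0 [H01 HP]]]]]]]] := lc y0.
exists U; split => //; split => //.
have Hp : forall y, U y -> {within [|0, 1|], continuous (H y)}.
  by move=> y Uy; exact: (hP _ (HP y Uy)).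
have I0 : [|0, 1|] 0 by apply/inIP; split; lra.
have I1 : [|0, 1|] 1 by apply/inIP; split; lra.
have [L HL] := choice (P := fun (xy : X * Y) (q : R -> X) => f xy.1 = y0 -> U xy.2 ->
    [/\ {within [|0, 1|], continuous q}, q 0 = xy.1 &
        forall u, [|0, 1|] u -> f (q u) = H xy.2 u]) (fun xy =>
    match pselect (f xy.1 = y0 /\ U xy.2) with
    | left h => let: ex_intro q hq := exist_lift (H xy.2) xy.1 (Hp _ (proj2 h))
          (eq_trans (proj1 h) (esym (proj1 (H01 _ (proj2 h))))) in
        ex_intro _ q (fun _ _ => hq)
    | right h => ex_intro _ (fun _ => xy.1) (fun a b => False_ind _ (h (conj a b)))
    end).
pose s x y := L (x, y) 1.
have Ls : forall x y, f x = y0 -> U y -> f (s x y) = y.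
  move=> x y fx Uy; have [_ _ Lp] := HL (x, y) fx Uy.
  by rewrite /s Lp //; exact: (proj2 (H01 y Uy)).
have scont : forall x, f x = y0 -> forall y1, U y1 -> forall N, nbhs (s x y1) N ->
    nbhs y1 (fun y => U y -> N (s x y)).
  move=> x fx y1 Uy1 N nN.
  exact: (@param_cont U H (fun y => L (x, y)) x Hc Hp
    (fun y Uy => HL (x, y) fx Uy) y1 Uy1 1 I1 N nN).
pose V (i : {x : X | f x = y0}) := [set z | U (f z) /\ s (sval i) (f z) = z].
exists {x : X | f x = y0}, V; split; last split.
- apply/seteqP; split => z; last by move=> [i _ [Uz _]].
  move=> Uz; set y := f z.
  have rpc : {within [|0, 1|], continuous (Defs.rev_path (H y))}.
    exact: (hP _ (Prev _ (HP y Uz))).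
  have fz : f z = Defs.rev_path (H y) 0 by rewrite /Defs.rev_path subr0 (proj2 (H01 y Uz)).
  have [r [rc r0 rp]] := exist_lift (Defs.rev_path (H y)) z rpc fz.
  have fr1 : f (r 1) = y0 by rewrite rp // /Defs.rev_path subrr (proj1 (H01 y Uz)).
  exists (exist _ (r 1) fr1) => //; split => //=.
  have [Lc L0 Lp] := HL (r 1, y) fr1 Uz.
  rewrite /s (@uniq_lift 0 1 0 (L (r 1, y)) (fun t => r (1 - t)) Lc (rev_cont r rc)) //.
  + by rewrite subrr.
  + move=> u Iu; rewrite Lp // rp; last exact: revI.
    by rewrite /Defs.rev_path opprB addrC subrK.
  + by rewrite L0 subr0.
- move=> [xi hi] [xj hj] ne; apply/seteqP; split => z // [[Uz hz] [_ hz']].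
  apply: ne; have e : xi = xj.
    have [Lci L0i Lpi] := HL (xi, f z) hi Uz.
    have [Lcj L0j Lpj] := HL (xj, f z) hj Uz.
    move: L0i L0j => /= L0i L0j.
    rewrite -L0i -L0j; apply: (@uniq_lift 0 1 1 _ _ Lci Lcj) => //.
      by move=> u Iu; rewrite Lpi // Lpj.
    by move: hz hz'; rewrite /s /= => -> ->.
  by subst xj; rewrite (Prop_irrelevance hi hj).
move=> [x fx]; rewrite /V /=.
have sc : {within U, continuous (s x)}.
  apply/subspace_continuousP => y1 Uy1 N nN.
  exact: (scont x fx y1 Uy1 N nN).
split.
  rewrite openE => z [Uz sz].
  have [W [g [oW Wz ofW gf gc]]] := chart z.
  have n1 : nbhs (f z) (fun y => U y -> W (s x y)).
    by apply: scont => //; rewrite sz; exact: onbhs oW Wz.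
  have n2 : nbhs z (f @^-1` (fun y => U y -> W (s x y))) := fc z _ n1.
  have n3 : nbhs z (f @^-1` U) := fc z _ (onbhs oU Uz).
  rewrite /interior; apply: filterS (filterI (filterI n2 n3) (onbhs oW Wz)).
  move=> w [[h1 h2] h3]; split => //.
  have Ws : W (s x (f w)) := h1 h2.
  by rewrite -(gf _ Ws) (Ls x (f w) fx h2) gf.
split; first exact: continuous_subspaceT.
split.
  apply/seteqP; split => y; first by move=> [z [Uz _] <-].
  move=> Uy; have fs := Ls x y fx Uy; exists (s x y) => //; rewrite /= fs.
  by split.
split.
  by move=> a b [_ ha] [_ hb] fab; rewrite -ha -hb fab.
by exists (s x); split => // a [].
Qed.
End Main.

Theorem mainTheorem4 (R : realType) (X Y : metricType R)
  (P : set (R -> Y)) (f : X -> Y) :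
  (forall p, P p -> is_path p) ->
  P_connected P ->
  locally_P_contractible P ->
  local_homeomorphism f ->
  weakly_proper f ->
  covering_projection f.
Proof.
move=> hP Pc lc [fc flh] [_ fwp].
exact: (@cover R X Y f fc flh fwp P hP Pc lc).
Qed.
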